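(* Let $\mathcal{O}$ be the observation space consisting of all real $2\times n$ matrices ($n\ge 1$ arbitrary) whose columns are unit vectors in $\mathbb{R}^2$, and let $\mathcal{A}=\{(\hat u,\sigma): \hat u\in\mathbb{R}^2,\ \|\hat u\|=1,\ 0\le\sigma\le 1\}$ be the action space. For $\theta\in\mathbb{R}$ let $R(\theta)\in SO(2)$ denote rotation by angle $\theta$, and let a rotation $R\in SO(2)$ act on $O\in\mathcal{O}$ by $O\mapsto RO$ (rotating every column) and on an action $a=(\hat u,\sigma)\in\mathcal{A}$ by $Ra:=(R\hat u,\sigma)$. For $O\in\mathcal{O}$ with $n$ columns such that $O\mathbf{1}_n\neq 0$ (where $\mathbf{1}_n$ is the all-ones vector of length $n$), define $\bar u(O)=\frac{O\mathbf{1}_n}{\|O\mathbf{1}_n\|}$ and let $\theta^*(O)$ be the angle of $\bar u(O)$ measured from the $x$-axis, i.e. the angle with $\bar u(O)=(\cos\theta^*(O),\sin\theta^*(O))^T$ (determined modulo $2\pi$). Define $$T_{\mathrm{pre}}(O)=R(\theta^*(O))^T O,\qquad T_{\mathrm{post}}^{O}(a)=R(\theta^*(O))\,a \quad (a\in\mathcal{A}).$$ Then for any function $m:\mathcal{O}\to\mathcal{A}$, the map $F(O):=T_{\mathrm{post}}^{O}\big(m(T_{\mathrm{pre}}(O))\big)$ is equivariant with respect to $SO(2)$: for every $R\in SO(2)$ and every $O\in\mathcal{O}$ with $O\mathbf{1}_n\neq 0$, one has $F(RO)=R\,F(O)$.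
   Context: In the paper, an observation of an agent is the collection of unit vectors (bearings) pointing from the agent to each of its visible neighbours, written as a $2\times n$ matrix whose columns are these unit vectors. An action is a movement direction (unit vector) together with a step size in $[0,1]$. A function $m$ from observations to actions is called equivariant with respect to rotations if $m(RO)=R\,m(O)$ for all observations $O$ and all $R\in SO(2)$, where rotations act on actions by rotating the direction component only. *)

(* Defs.v *)
From mathcomp Require Import all_boot all_order all_algebra.
From mathcomp Require Import all_classical all_reals.
From mathcomp Require Import trigo.
Set Implicit Arguments. Unset Strict Implicit. Unset Printing Implicit Defensive.
Import Order.TTheory GRing.Theory Num.Theory.
Local Open Scope ring_scope.

Section Defs.
Variable R : realType.

Definition vnorm (v : 'cV[R]_2) : R := Num.sqrt (\sum_(i < 2) v i 0 ^+ 2).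

Definition is_obs (n : nat) (O : 'M[R]_(2, n)) : Prop :=
  (0 < n)%N /\ forall j : 'I_n, vnorm (col j O) = 1.

Definition action := ('cV[R]_2 * R)%type.
Definition is_action (a : action) : Prop :=
  vnorm a.1 = 1 /\ 0 <= a.2 <= 1.

Definition is_SO2 (Q : 'M[R]_2) : Prop := Q^T *m Q = 1%:M /\ \det Q = 1.

Definition rot (t : R) : 'M[R]_2 :=
  \matrix_(i < 2, j < 2)
    (if i == j then cos t else if (i == 0) then - sin t else sin t).

Definition act_rot (Q : 'M[R]_2) (a : action) : action := (Q *m a.1, a.2).

Definition colsum n (O : 'M[R]_(2, n)) : 'cV[R]_2 := O *m const_mx 1.

Definition ubar n (O : 'M[R]_(2, n)) : 'cV[R]_2 := (vnorm (colsum O))^-1 *: colsum O.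

Definition theta_star n (O : 'M[R]_(2, n)) : R :=
  xget 0 [set t : R | cos t = ubar O 0 0 /\ sin t = ubar O 1 0].

Definition T_pre n (O : 'M[R]_(2, n)) : 'M[R]_(2, n) := (rot (theta_star O))^T *m O.
Definition T_post n (O : 'M[R]_(2, n)) (a : action) : action := act_rot (rot (theta_star O)) a.

Definition F_eqv (m : forall n, 'M[R]_(2, n) -> action) n (O : 'M[R]_(2, n)) : action :=
  T_post O (m n (T_pre O)).

End Defs.

(* Main.v *)
Require Import Defs.
From mathcomp Require Import all_boot all_order all_algebra.
From mathcomp Require Import all_classical all_reals.
From mathcomp Require Import trigo.
From mathcomp Require Import ring lra.
Import Order.TTheory GRing.Theory Num.Theory.
Local Open Scope ring_scope.

Section S.
Variable R : realType.

Lemma angle_ex (x y : R) : x ^+ 2 + y ^+ 2 = 1 ->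
  exists t : R, cos t = x /\ sin t = y.
Proof.
move=> h.
have hx : -1 <= x <= 1 by apply/andP; split; nra.
have hs : Num.sqrt (1 - x ^+ 2) = `|y|.
  by rewrite -sqrtr_sqr; congr Num.sqrt; lra.
case: (lerP 0 y) => hy.
  exists (acos x); split; first by rewrite acosK // in_itv /= hx.
  by rewrite sin_acos // hs ger0_norm.
exists (- acos x); split; first by rewrite cosN acosK // in_itv /= hx.
by rewrite sinN sin_acos // hs ltr0_norm // opprK.
Qed.

Lemma vnormE (v : 'cV[R]_2) : vnorm v = Num.sqrt (v 0 0 ^+ 2 + v 1 0 ^+ 2).
Proof. rewrite /vnorm !big_ord_recr big_ord0 /= add0r; do 2 f_equal; f_equal; f_equal; exact/val_inj. Qed.

Lemma ubar_unit n (O : 'M[R]_(2, n)) : colsum O != 0 ->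
  ubar O 0 0 ^+ 2 + ubar O 1 0 ^+ 2 = 1.
Proof.
rewrite /ubar; move: (colsum O) => v hs.
rewrite !mxE vnormE.
have hpos : 0 < v 0 0 ^+ 2 + v 1 0 ^+ 2.
  have : v 0 0 != 0 \/ v 1 0 != 0.
    case: (eqVneq (v 0 0) 0) => ha; last by left.
    case: (eqVneq (v 1 0) 0) => hb; last by right.
    exfalso; move/eqP: hs; apply; apply/matrixP => i j.
    rewrite (ord1 j) mxE; case: i => [[|[|i]] Hi] //.
    - by rewrite (_ : Ordinal Hi = 0) //; apply/val_inj.
    - by rewrite (_ : Ordinal Hi = 1) //; apply/val_inj.
  have g0 := sqr_ge0 (v 0 0); have g1 := sqr_ge0 (v 1 0).
  case=> h.
    have : 0 < v 0 0 ^+ 2 by rewrite lt_def sqrf_eq0 h sqr_ge0.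
    lra.
  have : 0 < v 1 0 ^+ 2 by rewrite lt_def sqrf_eq0 h sqr_ge0.
  lra.
rewrite !exprMn exprVn sqr_sqrtr ?ltW // -mulrDr mulVf //.
by rewrite gt_eqF.
Qed.

Lemma sum2 (F : 'I_2 -> R) : \sum_(i < 2) F i = F 0 + F 1.
Proof.
rewrite !big_ord_recr big_ord0 /= add0r; congr (F _ + F _); exact/val_inj.
Qed.

Lemma det2 (Q : 'M[R]_2) : \det Q = Q 0 0 * Q 1 1 - Q 0 1 * Q 1 0.
Proof.
rewrite (expand_det_row _ 0) sum2 /cofactor !det_mx11 !mxE.
have l00 : lift (0:'I_2) (0:'I_1) = 1 by apply/val_inj.
have l10 : lift (1:'I_2) (0:'I_1) = 0 by apply/val_inj.
rewrite l00 l10 /= expr0 expr1; ring.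
Qed.

Lemma SO2_shape (Q : 'M[R]_2) : is_SO2 Q -> Q 1 1 = Q 0 0 /\ Q 0 1 = - Q 1 0.
Proof.
case=> h1 h2.
have e := fun i j => congr1 (fun M : 'M[R]_2 => M i j) h1.
move: (e 0 0) (e 0 1) (e 1 1) h2.
rewrite !mxE !sum2 !mxE det2 /= => a b c d.
have z : (Q 1 1 - Q 0 0) ^+ 2 + (Q 0 1 + Q 1 0) ^+ 2 = 0 by nra.
have z1 := sqr_ge0 (Q 1 1 - Q 0 0); have z2 := sqr_ge0 (Q 0 1 + Q 1 0).
have q1 : (Q 1 1 - Q 0 0) ^+ 2 = 0 by lra.
have q2 : (Q 0 1 + Q 1 0) ^+ 2 = 0 by lra.
move/eqP: q1; rewrite sqrf_eq0 subr_eq0 => /eqP ->.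
move/eqP: q2; rewrite sqrf_eq0 addr_eq0 => /eqP ->.
done.
Qed.

End S.

Theorem lemma1 (R : realType) (m : forall n, 'M[R]_(2, n) -> action R)
  (hm : forall n (O : 'M[R]_(2, n)), is_obs O -> is_action (m n O))
  (Q : 'M[R]_2) (hQ : is_SO2 Q)
  (n : nat) (O : 'M[R]_(2, n)) (hO : is_obs O) (hsum : colsum O != 0) :
  F_eqv m (Q *m O) = act_rot Q (F_eqv m O).
Proof.
have [q11 q01] := @SO2_shape R Q hQ.
have [h1 _] := hQ.
have Qv : forall (v : 'cV[R]_2) i, (Q *m v) i 0 = Q i 0 * v 0 0 + Q i 1 * v 1 0.
  by move=> v i; rewrite mxE (@sum2 R).
have hcs : colsum (Q *m O) = Q *m colsum O by rewrite /colsum mulmxA.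
have hsq : Q 0 0 ^+ 2 + Q 1 0 ^+ 2 = 1.
  have := congr1 (fun M : 'M[R]_2 => M 0 0) h1.
  by rewrite !mxE sum2 !mxE /= => ->.
have hvn : forall v : 'cV[R]_2, vnorm (Q *m v) = vnorm v.
  move=> v; rewrite !vnormE !Qv q11 q01; congr Num.sqrt.
  transitivity ((Q 0 0 ^+ 2 + Q 1 0 ^+ 2) * (v 0 0 ^+ 2 + v 1 0 ^+ 2)); first ring.
  by rewrite hsq mul1r.
have hub : ubar (Q *m O) = Q *m ubar O.
  by rewrite /ubar hcs hvn scalemxAr.
have hu := @ubar_unit R n O hsum.
have hu' : ubar (Q *m O) 0 0 ^+ 2 + ubar (Q *m O) 1 0 ^+ 2 = 1.
  rewrite hub !Qv q11 q01; rewrite -hu -[RHS]mul1r -hsq; ring.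
have [ct st] : cos (theta_star O) = ubar O 0 0 /\ sin (theta_star O) = ubar O 1 0
  := xgetPex 0 (@angle_ex R _ _ hu).
have [ct' st'] : cos (theta_star (Q *m O)) = ubar (Q *m O) 0 0 /\
   sin (theta_star (Q *m O)) = ubar (Q *m O) 1 0
  := xgetPex 0 (@angle_ex R _ _ hu').
have key : Defs.rot (theta_star (Q *m O)) = Q *m Defs.rot (theta_star O).
  move: ct st ct' st'; set t := theta_star O; set t' := theta_star (Q *m O) => ct st ct' st'.
  rewrite hub !Qv q11 q01 in ct' st'.
  apply/matrixP => i j; rewrite !mxE (@sum2 R) !mxE /=.
  have o2 : forall k : 'I_2, k = 0 \/ k = 1.
    by case=> [[|[|k]] Hk]; [left|right|]; try apply/val_inj.
  case: (o2 i) => ->; case: (o2 j) => -> /=;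
  rewrite ?q11 ?q01 ?ct' ?st' -?ct -?st; ring.
rewrite /F_eqv /T_post /T_pre key /act_rot /=.
rewrite trmx_mul -!mulmxA (mulmxA Q^T) h1 mul1mx.
by rewrite mulmxA.
Qed.
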